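(* Let $|\mathfrak{X}|\ge2$ and let $\mathbf{D}^{(1)}$ be an $(m_n,n,\mathbf{P})$ unlabeled Markov database. Define the collapsed database $\tilde{\mathbf{D}}^{(1)}$ by $\tilde D^{(1)}_{i,j}=1$ if $D^{(1)}_{i,j}=1$ and $\tilde D^{(1)}_{i,j}=2$ otherwise, and the column histograms $\tilde H^{(1)}_j=\sum_{i=1}^{m_n}\mathbb{1}[\tilde D^{(1)}_{i,j}=2]$ for $j\in[n]$. If $m_n=\omega(n^4)$, then $$\Pr\big(\exists\, i,j\in[n],\ i\neq j,\ \tilde H^{(1)}_i=\tilde H^{(1)}_j\big)\to0\quad\text{as } n\to\infty.$$
   Context: Unlabeled Markov database: for a finite alphabet $\mathfrak{X}=\{1,\dots,|\mathfrak{X}|\}$, an $(m_n,n,\mathbf{P})$ unlabeled Markov database is a random $m_n\times n$ matrix $\mathbf{D}=(D_{i,j})$ with entries in $\mathfrak{X}$ whose rows are i.i.d., each row being a first-order stationary Markov chain $(D_{i,1},\dots,D_{i,n})$ with $D_{i,1}\sim\pi=[u_1,\dots,u_{|\mathfrak{X}|}]$ and transition matrix $\mathbf{P}=\gamma\mathbf{I}+(1-\gamma)\mathbf{U}$, where $\mathbf{I}$ is the identity, $U_{i,j}=u_j>0$ for all $i,j$, $\sum_j u_j=1$, and $\gamma\in\big(-\min_j\frac{u_j}{1-u_j},1\big)$; $\pi$ is the stationary distribution of $\mathbf{P}$. *)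

(* Defs.v *)
From HB Require Import structures.
From mathcomp Require Import all_boot all_order all_algebra.
From mathcomp Require Import all_classical all_reals all_analysis.
Set Implicit Arguments. Unset Strict Implicit. Unset Printing Implicit Defensive.
Import Order.TTheory GRing.Theory Num.Theory.
Local Open Scope ring_scope.

(* Alphabet X = {1,...,K} is represented by 'I_K; the symbol "1" of the paper
   is the ordinal with value 0, symbol j+1 is the ordinal with value j. *)

Section MarkovDB.
Variables (R : realType) (K : nat) (u : 'I_K -> R) (gamma : R).

Definition trans (x y : 'I_K) : R :=
  gamma * (x == y)%:R + (1 - gamma) * u y.

Fixpoint chain_prob (x : 'I_K) (s : seq 'I_K) : R :=
  match s with
  | [::] => 1
  | y :: s' => trans x y * chain_prob y s'
  end.

(* probability of a row (D_{i,1},...,D_{i,n}) : D_{i,1} ~ pi = u, then P *)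
Definition row_prob (s : seq 'I_K) : R :=
  match s with
  | [::] => 1
  | x :: s' => u x * chain_prob x s'
  end.

Definition db_prob (m n : nat) (d : {ffun 'I_m -> n.-tuple 'I_K}) : R :=
  \prod_(i < m) row_prob (tval (d i)).

(* column histogram of the collapsed database: number of entries in column j
   that are different from symbol 1 (i.e. collapsed value 2) *)
Definition col_hist (m n : nat) (d : {ffun 'I_m -> n.-tuple 'I_K}) (j : 'I_n) : nat :=
  #|[set i : 'I_m | val (tnth (d i) j) != 0%N]|.

Definition hist_collision (m n : nat) (d : {ffun 'I_m -> n.-tuple 'I_K}) : bool :=
  [exists i : 'I_n, exists j : 'I_n, (i != j) && (col_hist d i == col_hist d j)].

Definition prob_hist_collision (m n : nat) : R :=
  \sum_(d : {ffun 'I_m -> n.-tuple 'I_K} | hist_collision d) db_prob d.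

End MarkovDB.

(* Main.v *)
Require Import Defs.
From HB Require Import structures.
From mathcomp Require Import all_boot all_order all_algebra.
From mathcomp Require Import all_classical all_reals all_analysis.
From mathcomp Require Import zify ring lra.
Set Implicit Arguments. Unset Strict Implicit. Unset Printing Implicit Defensive.
Import Order.TTheory GRing.Theory Num.Theory.
Lemma bin_mono i k : (2 * k < i)%N -> ('C(i, k) <= 'C(i, k.+1))%N.
Proof.
move=> h; have e := mul_bin_left i k.
have hk : (k.+1 <= i - k)%N by lia.
have : (k.+1 * 'C(i, k) <= k.+1 * 'C(i, k.+1))%N.
  rewrite e; exact: leq_mul.
by rewrite leq_pmul2l.
Qed.

Lemma bin_le_halfL i k : (k <= i./2)%N -> ('C(i, k) <= 'C(i, i./2))%N.
Proof.
move=> h; have [d hd] : exists d, (k + d = i./2)%N by exists (i./2 - k)%N; lia.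
elim: d k hd {h} => [|d IH] k hd; first by rewrite -hd addn0.
apply: leq_trans (IH k.+1 _); last by lia.
apply: bin_mono. have := odd_double_half i. lia.
Qed.

Lemma bin_le_half i k : ('C(i, k) <= 'C(i, i./2))%N.
Proof.
case: (leqP k i./2) => hk; first exact: bin_le_halfL.
case: (leqP k i) => hki; last by rewrite bin_small.
rewrite -bin_sub //; apply: bin_le_halfL.
have := odd_double_half i. lia.
Qed.


Lemma bin_odd_rec j : ('C(j.*2.+1, j.+1) * j.+1 = 'C(j.*2, j) * j.*2.+1)%N.
Proof. have := mul_bin_diag j.*2.+1 j; rewrite /= => e; rewrite mulnC -e mulnC. done. Qed.

Lemma bin_odd_sym j : 'C(j.*2.+1, j.+1) = 'C(j.*2.+1, j).
Proof. rewrite -bin_sub; last by lia. congr binomial; lia. Qed.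

Lemma bin_even_rec j : ('C(j.+1.*2, j.+1) * j.+1 = 'C(j.*2, j) * (2 * j.*2.+1))%N.
Proof.
rewrite doubleS binS -bin_odd_sym.
rewrite mulnDl bin_odd_rec. lia.
Qed.

Lemma bin_even_sq j : ('C(j.*2, j) ^ 2 * j.*2.+1 <= 16 ^ j)%N.
Proof.
elim: j => [|j IH] //.
set c := 'C(j.*2, j) in IH *; set c' := 'C(j.+1.*2, j.+1).
have e := bin_even_rec j; rewrite -/c -/c' in e.
rewrite -(@leq_pmul2r (j.+1 ^ 2)) //.
have -> : (c' ^ 2 * (j.+1).*2.+1 * j.+1 ^ 2 = (c' * j.+1)^2 * (j.+1).*2.+1)%N by ring.
rewrite e expnS.
have h1 : ((c * (2 * j.*2.+1)) ^ 2 * j.+1.*2.+1 = 4 * (c^2 * j.*2.+1) * (j.*2.+1 * j.*2.+3))%N.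
  rewrite !doubleS; ring.
rewrite h1.
have h2 : (j.*2.+1 * j.*2.+3 <= 4 * j.+1 ^ 2)%N by rewrite -!mul2n; nia.
apply: (leq_trans (leq_mul (leq_mul (leqnn 4) IH) h2)). 
apply: eq_leq. rewrite [16 ^ j.+1]expnS; set A := 16 ^ j; nia.
Qed.

Lemma bin_half_sq i : ('C(i, i./2) ^ 2 * i.+1 <= 4 ^ i)%N.
Proof.
have := odd_double_half i; case: (odd i) => /= e; rewrite -e.
- rewrite add1n /= uphalf_double.
  set j := i./2. have H := bin_even_sq j.
  rewrite -(@leq_pmul2r (j.+1 ^ 2)) //.
  have -> : ('C(j.*2.+1, j) ^ 2 * j.*2.+2 * j.+1 ^ 2 = ('C(j.*2.+1, j) * j.+1) ^ 2 * j.*2.+2)%N by ring.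
  rewrite -bin_odd_sym bin_odd_rec.
  have -> : (('C(j.*2, j) * j.*2.+1) ^ 2 * j.*2.+2 = 'C(j.*2, j)^2 * j.*2.+1 * (j.*2.+1 * j.*2.+2))%N by ring.
  apply: (@leq_trans (16 ^ j * (j.*2.+1 * j.*2.+2))%N); first exact: leq_mul.
  rewrite expnS -mul2n expnM.
  have h : (j.*2.+1 * j.*2.+2 <= 4 * j.+1 ^ 2)%N by rewrite -!mul2n; nia.
  rewrite -!mul2n in h. set A := 16 ^ j. nia.
- rewrite ?add0n doubleK. set j := i./2. rewrite [X in (_ <= 4 ^ X)%N]/double. have := bin_even_sq j. have -> : (16 ^ j = 4 ^ j.*2)%N by rewrite -mul2n expnM. done.
Qed.


Local Open Scope ring_scope.
Section Poly.
Variable R : realFieldType.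
Implicit Types p q : {poly R}.

Definition npoly p := forall k, 0 <= p`_k.

Lemma npolyM p q : npoly p -> npoly q -> npoly (p * q).
Proof.
move=> hp hq k; rewrite coefM; apply: sumr_ge0 => j _; exact: mulr_ge0.
Qed.

Lemma npolyX p k : npoly p -> npoly (p ^+ k).
Proof.
move=> hp; elim: k => [|k IH]; first by move=> i; rewrite coef1; case: (i == 0)%N.
by rewrite exprS; apply: npolyM.
Qed.

Lemma sum_coef_le q i : npoly q -> \sum_(j < i.+1) q`_j <= q.[1].
Proof.
move=> hq; rewrite (@horner_coef_wide _ (maxn i.+1 (size q))) ?leq_maxr //.
rewrite (big_ord_widen (maxn i.+1 (size q)) (fun j => q`_j)) ?leq_maxl //.
rewrite big_mkcond /=; apply: ler_sum => j _.
rewrite expr1n mulr1; case: ifP => // _; exact: hq.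
Qed.

Lemma coefM_le f g (M : R) i : npoly f -> npoly g -> (forall k, f`_k <= M) ->
  (f * g)`_i <= M * g.[1].
Proof.
move=> hf hg hM; rewrite coefMr.
apply: (@le_trans _ _ (\sum_(j < i.+1) M * g`_j)).
  apply: ler_sum => j _; apply: ler_wpM2r => //.
rewrite -mulr_sumr; apply: ler_wpM2l; last exact: sum_coef_le.
exact: le_trans (hf 0%N) (hM 0%N).
Qed.


Lemma coef_F i k : ((1 + 'X^2 : {poly R}) ^+ i)`_k <= ('C(i, i./2))%:R.
Proof.
rewrite addrC exprD1n coef_sum.
under eq_bigr => j _ do rewrite coefMn -exprM coefXn.
case: (ltnP k./2 i.+1) => h.
  rewrite (bigD1 (Ordinal h)) //= big1 ?addr0.
    case: eqP => _; last by rewrite mul0rn ler0n.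
    rewrite mulr1n ler_nat; exact: bin_le_half.
  move=> j hj; case: eqP; last by rewrite mul0rn.
  move=> e; exfalso; move/eqP: hj; apply; apply: val_inj => /=.
  by rewrite e mul2n doubleK.
rewrite big1 ?ler0n // => j _; case: eqP; last by rewrite mul0rn.
move=> e; exfalso; move: h; rewrite e mul2n doubleK.
by rewrite leqNgt ltn_ord.
Qed.
Lemma binom_sum (q s : R) m : q + s = 1 ->
  \sum_(i < m.+1) 'C(m, i)%:R * q ^+ i * s ^+ (m - i) = 1.
Proof.
move=> e; transitivity ((s + q) ^+ m); last by rewrite addrC e expr1n.
rewrite exprDn.
by apply: eq_bigr => i _; rewrite -mulr_natl; ring.
Qed.

Lemma binom_inv (q s : R) m : 0 <= s -> q + s = 1 ->
  (m.+1)%:R * q * \sum_(i < m.+1) ('C(m, i)%:R * q ^+ i * s ^+ (m - i)) / (i.+1)%:R <= 1.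
Proof.
move=> hs e.
have E : (m.+1)%:R * q * \sum_(i < m.+1) ('C(m, i)%:R * q ^+ i * s ^+ (m - i)) / (i.+1)%:R
   = (s + q) ^+ m.+1 - s ^+ m.+1.
  rewrite [(s + q) ^+ _]exprDn [in RHS]big_ord_recl /= subn0 bin0 mulr1n expr0 mulr1.
  rewrite addrAC subrr add0r mulr_sumr; apply: eq_bigr => i _.
  rewrite subSS /bump /= add1n.
  have hb := mul_bin_diag m.+1 i; rewrite /= in hb.
  have hi : (i.+1)%:R != 0 :> R by rewrite pnatr_eq0.
  have h2 : ((m.+1)%:R * 'C(m, i)%:R = (i.+1)%:R * 'C(m.+1, i.+1)%:R :> R) by rewrite -!natrM hb.
  rewrite -mulr_natl exprS.
  transitivity ((m.+1)%:R * 'C(m, i)%:R / (i.+1)%:R * (q * q ^+ i * s ^+ (m - i))); first by ring.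
  rewrite h2 [_ * _ / _]mulrAC divff // mul1r -mulr_natl; ring.
rewrite E [s + q]addrC e expr1n lerBlDr lerDl; exact: exprn_ge0.
Qed.

Lemma cs_sum n (w h : 'I_n -> R) : (forall i, 0 <= w i) -> \sum_i w i = 1 ->
  (\sum_i w i * h i) ^+ 2 <= \sum_i w i * h i ^+ 2.
Proof.
move=> hw e; set S := \sum_i w i * h i.
have : 0 <= \sum_i w i * (h i - S) ^+ 2.
  apply: sumr_ge0 => i _; apply: mulr_ge0 => //; exact: sqr_ge0.
have -> : \sum_i w i * (h i - S) ^+ 2 = \sum_i w i * h i ^+ 2 - 2 * S * S + S ^+ 2 * \sum_i w i.
  rewrite (eq_bigr (fun i => (w i * h i ^+ 2 + (- (2*S)) * (w i * h i)) + S^+2 * w i)); last by move=> i _; ring.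
  rewrite !big_split /= -!mulr_sumr -/S; ring.
rewrite e mulr1; lra.
Qed.
End Poly.

Section P2.
Variable R : realFieldType.

Lemma coef_pow_bound (p : {poly R}) (d : R) m l : npoly p -> p.[1] = 1 -> 0 < d ->
  d <= p`_0 -> d <= p`_2 ->
  (m.+1)%:R * (2 * d) * ((p ^+ m)`_l) ^+ 2 <= 1.
Proof.
move=> hp p1 d0 hp0 hp2.
set h := d *: (1 + 'X^2 : {poly R}); set r := p - h.
have hF1 : npoly (1 + 'X^2 : {poly R}).
  by move=> k; rewrite coefD coef1 coefXn; apply: addr_ge0; case: eqP.
have hr : npoly r.
  move=> k; rewrite /r /h coefB coefZ coefD coef1 coefXn subr_ge0.
  case: k => [|[|[|k]]] /=; rewrite ?addr0 ?add0r ?mulr1 ?mulr0 //; exact: hp.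
have r1 : r.[1] = 1 - 2 * d.
  rewrite /r /h hornerD hornerN hornerZ hornerD hornerXn expr1n p1.
  have -> : (1 : {poly R}).[1] = 1 by rewrite -polyC1 hornerC.
  ring.
have rge : 0 <= r.[1].
  rewrite horner_coef; apply: sumr_ge0 => i _; rewrite expr1n mulr1; exact: hr.
have s0 : 0 <= 1 - 2 * d by rewrite -r1.
have pe : p = r + h by rewrite /r subrK.
set w := fun i : 'I_m.+1 => 'C(m, i)%:R * (2 * d) ^+ i * (1 - 2 * d) ^+ (m - i).
set hh := fun i : 'I_m.+1 => 'C(i, i./2)%:R / 2 ^+ i : R.
have w0 : forall i, 0 <= w i.
  move=> i; apply: mulr_ge0; last exact: exprn_ge0.
  apply: mulr_ge0 => //; apply: exprn_ge0; lra.
have w1 : \sum_i w i = 1 by apply: binom_sum; ring.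
have cb : (p ^+ m)`_l <= \sum_i w i * hh i.
  rewrite {1}pe exprDn coef_sum; apply: ler_sum => i _.
  rewrite coefMn /h exprZn mulrC -scalerAl coefZ.
  have hb := coefM_le l (npolyX i hF1) (npolyX (m - i) hr) (@coef_F R i).
  rewrite horner_exp r1 in hb.
  apply: (@le_trans _ _ ((d ^+ i * ('C(i, i./2)%:R * (1 - 2 * d) ^+ (m - i))) *+ 'C(m, i))).
    apply: ler_wMn2r; apply: ler_wpM2l => //; exact: exprn_ge0 (ltW d0).
  rewrite /w /hh /= exprMn -mulr_natl.
  have h2 : (2 : R) ^+ i != 0 by rewrite expf_neq0 // pnatr_eq0.
  rewrite le_eqVlt; apply/orP; left; apply/eqP.
  transitivity ((2 ^+ i / 2 ^+ i) * ('C(m, i)%:R * d ^+ i * ('C(i, i./2)%:R * (1 - 2 * d) ^+ (m - i)))).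
    by rewrite divff // mul1r; ring.
  ring.
have c0 : 0 <= (p ^+ m)`_l by apply: npolyX.
have cs := cs_sum hh w0 w1.
have hh2 : forall i, w i * hh i ^+ 2 <= w i / (i.+1)%:R.
  move=> i; apply: ler_wpM2l => //; rewrite -[X in _ <= X]mul1r.
  rewrite ler_pdivlMr ?ltr0Sn //.
  have hn := bin_half_sq i.
  have : (('C(i, i./2) ^ 2 * i.+1)%N%:R <= (4 ^ i)%N%:R :> R) by rewrite ler_nat.
  rewrite natrM !natrX /hh => h3.
  have h4 : (0 : R) < (2 ^+ i) ^+ 2 by rewrite exprn_gt0 // exprn_gt0.
  rewrite expr_div_n mulrAC ler_pdivrMr // mul1r.
  rewrite -exprM mulnC exprM.
  have -> : (2 : R) ^+ 2 = 4 by rewrite expr2 -natrM.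
  exact: h3.
have e2 : 2 * d + (1 - 2 * d) = 1 by ring.
apply: le_trans (binom_inv m s0 e2).
have q0 : 0 <= (m.+1)%:R * (2 * d) by apply: mulr_ge0 => //; apply: mulr_ge0 => //; exact: ltW.
apply: ler_wpM2l => //.
apply: le_trans (ler_sum _ (fun i _ => hh2 i)).
apply: le_trans cs.
rewrite !expr2; apply: ler_pM => //.
Qed.
End P2.

Lemma sum_tupleS (R : realType) (T : finType) L (F : seq T -> R) :
  \sum_(s : L.+1.-tuple T) F s = \sum_(y : T) \sum_(s : L.-tuple T) F (y :: s).
Proof.
rewrite pair_big /=.
rewrite (reindex (fun p : T * L.-tuple T => [tuple of p.1 :: p.2])) /=; last first.
  exists (fun t : L.+1.-tuple T => (thead t, [tuple of behead t])).
    by move=> [x t] _ /=; congr pair; apply: val_inj.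
  by move=> t _; rewrite /= [in RHS](tuple_eta t).
by [].
Qed.

Lemma sum_tuple0 (R : realType) (T : finType) (F : seq T -> R) :
  \sum_(s : 0.-tuple T) F s = F [::].
Proof.
rewrite (big_pred1 [tuple]) // => t /=; apply/esym/eqP; exact: tuple0.
Qed.

Section Markov.
Variables (R : realType) (K : nat) (u : 'I_K -> R) (gamma : R) (o : 'I_K).
Hypothesis hu : \sum_j u j = 1.

Definition Ind (y : 'I_K) : R := (y == o)%:R.
Definition pk (k : nat) (x : 'I_K) : R := u o + gamma ^+ k * (Ind x - u o).
Definition Sc L x (phi : seq 'I_K -> R) :=
  \sum_(s : L.-tuple 'I_K) chain_prob u gamma x s * phi s.
Definition Rw n (phi : seq 'I_K -> R) :=
  \sum_(t : n.-tuple 'I_K) row_prob u gamma t * phi t.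

Lemma sum_delta (x : 'I_K) (F : 'I_K -> R) : \sum_y (x == y)%:R * F y = F x.
Proof.
rewrite (bigD1 x) //= eqxx mul1r big1 ?addr0 // => y hy.
by rewrite eq_sym (negbTE hy) mul0r.
Qed.

Lemma sum_Ind (F : 'I_K -> R) : \sum_y F y * Ind y = F o.
Proof.
under eq_bigr => y _ do rewrite mulrC /Ind eq_sym.
exact: sum_delta.
Qed.

Lemma trans_sum x : \sum_y trans u gamma x y = 1.
Proof.
rewrite /trans big_split /= -mulr_sumr -mulr_sumr hu.
have := sum_delta x (fun _ => 1); under eq_bigr => y _ do rewrite mulr1.
move=> ->; ring.
Qed.

Lemma trans_o x : trans u gamma x o = pk 1 x.
Proof. by rewrite /trans /pk /Ind eq_sym; ring. Qed.

Lemma one_step x (a b : R) :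
  \sum_y trans u gamma x y * (a + b * Ind y) = a + b * pk 1 x.
Proof.
under eq_bigr => y _ do rewrite mulrDr.
rewrite big_split /= -mulr_suml trans_sum mul1r.
under eq_bigr => y _ do rewrite mulrCA.
by rewrite -mulr_sumr sum_Ind trans_o.
Qed.

Lemma step_p k x : \sum_y trans u gamma x y * pk k y = pk k.+1 x.
Proof.
have e : forall y, pk k y = (u o - gamma ^+ k * u o) + gamma ^+ k * Ind y.
  by move=> y; rewrite /pk; ring.
under eq_bigr => y _ do rewrite e.
rewrite one_step /pk expr1 exprS; ring.
Qed.

Lemma sum_trans_Ind x : \sum_y trans u gamma x y * Ind y = pk 1 x.
Proof. by rewrite sum_Ind trans_o. Qed.

Lemma Ind_p j y : Ind y * pk j y = Ind y * pk j o.
Proof. by rewrite /Ind; case: eqP => [->|_]; rewrite ?mul0r. Qed.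

Lemma Sc_cons L x phi :
  Sc L.+1 x phi = \sum_y trans u gamma x y * Sc L y (fun s => phi (y :: s)).
Proof.
rewrite /Sc (sum_tupleS _ (fun s => chain_prob u gamma x s * phi s)); apply: eq_bigr => y _; rewrite mulr_sumr.
by apply: eq_bigr => s _ /=; rewrite mulrA.
Qed.

Lemma Sc_scale L x c phi : Sc L x (fun s => c * phi s) = c * Sc L x phi.
Proof. by rewrite /Sc mulr_sumr; apply: eq_bigr => s _; ring. Qed.

Lemma Sc_one L x : Sc L x (fun _ => 1) = 1.
Proof.
elim: L x => [|L IH] x; first by rewrite /Sc (sum_tuple0 (fun s => chain_prob u gamma x s * 1)) /= mulr1.
rewrite Sc_cons; under eq_bigr => y _ do rewrite IH mulr1.
exact: trans_sum.
Qed.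

Lemma Sc_const L x c : Sc L x (fun _ => c) = c.
Proof.
have := Sc_scale L x c (fun _ => 1); under [X in X = _ -> _]eq_bigr => s _ do rewrite mulr1.
by rewrite Sc_one mulr1.
Qed.

Lemma one_point k L x : (k < L)%N -> Sc L x (fun s => Ind (nth o s k)) = pk k.+1 x.
Proof.
elim: k L x => [|k IH] [|L] x //= hk.
  rewrite Sc_cons; under eq_bigr => y _ do rewrite /= Sc_const.
  exact: sum_trans_Ind.
rewrite Sc_cons; under eq_bigr => y _ do rewrite /= IH //.
exact: step_p.
Qed.

Lemma two_point k l L x : (k < l)%N -> (l < L)%N ->
  Sc L x (fun s => Ind (nth o s k) * Ind (nth o s l)) = pk k.+1 x * pk (l - k) o.
Proof.
elim: k l L x => [|k IH] [|l] [|L] x //= hkl hl.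
  rewrite Sc_cons; under eq_bigr => y _ do rewrite /= Sc_scale one_point // Ind_p mulrA.
  by rewrite -mulr_suml sum_trans_Ind subn0.
rewrite Sc_cons; under eq_bigr => y _ do rewrite /= IH // mulrA.
by rewrite -mulr_suml step_p.
Qed.

Lemma Rw_cons L phi : Rw L.+1 phi = \sum_x u x * Sc L x (fun s => phi (x :: s)).
Proof.
rewrite /Rw (sum_tupleS _ (fun s => row_prob u gamma s * phi s)); apply: eq_bigr => y _; rewrite /Sc mulr_sumr.
by apply: eq_bigr => s _ /=; rewrite mulrA.
Qed.

Lemma stat_p k : \sum_x u x * pk k x = u o.
Proof.
have e : forall x, u x * pk k x = (u o - gamma ^+ k * u o) * u x + gamma ^+ k * (u x * Ind x).
  by move=> x; rewrite /pk; ring.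
under eq_bigr => x _ do rewrite e.
rewrite big_split /= -!mulr_sumr hu sum_Ind; ring.
Qed.

Lemma Rw_one n i : (i < n)%N -> Rw n (fun t => Ind (nth o t i)) = u o.
Proof.
case: n => [|L] // hi; rewrite Rw_cons.
case: i hi => [|i] hi /=.
  under eq_bigr => x _ do rewrite Sc_const.
  exact: sum_Ind.
under eq_bigr => x _ do rewrite one_point //.
exact: stat_p.
Qed.

Lemma Rw_two n i j : (i < j)%N -> (j < n)%N ->
  Rw n (fun t => Ind (nth o t i) * Ind (nth o t j)) = u o * pk (j - i) o.
Proof.
case: n => [|L] //; case: j => [|j] //; rewrite Rw_cons => hij hj.
case: i hij => [|i] hij /=.
  under eq_bigr => x _ do rewrite Sc_scale one_point // Ind_p mulrA.
  by rewrite -mulr_suml sum_Ind subn0.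
under eq_bigr => x _ do rewrite two_point // mulrA.
by rewrite -mulr_suml stat_p subSS.
Qed.

Lemma Rw_total n : Rw n (fun _ => 1) = 1.
Proof.
case: n => [|L]; first by rewrite /Rw (sum_tuple0 (fun s => row_prob u gamma s * 1)) /= mulr1.
rewrite Rw_cons; under eq_bigr => x _ do rewrite Sc_const mulr1.
exact: hu.
Qed.

End Markov.


Lemma prod_scaleX (R : realType) (I : finType) (a : I -> R) (b : I -> nat) :
  \prod_i (a i *: 'X^(b i) : {poly R}) = (\prod_i a i) *: 'X^(\sum_i b i).
Proof.
rewrite -prodrXr.
apply: (big_rec3 (fun x y z => x = y *: z)); first by rewrite scale1r.
move=> i x y z _ ->.
by rewrite -scalerAl -scalerAr scalerA.
Qed.

Lemma ffun_poly (R : realType) (T : finType) m (w : T -> R) (Z : T -> nat) k :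
  ((\sum_t w t *: 'X^(Z t)) ^+ m)`_k =
  \sum_(d : {ffun 'I_m -> T} | (\sum_r Z (d r))%N == k) \prod_r w (d r).
Proof.
rewrite -[in LHS](card_ord m) -prodr_const bigA_distr_bigA /=.
under eq_bigr => d _ do rewrite prod_scaleX.
by rewrite coef_sumMXn.
Qed.

Lemma card_set_sum m (P : pred 'I_m) : #|[set r | P r]| = (\sum_r P r)%N.
Proof.
rewrite -sum1_card big_mkcond /=; apply: eq_bigr => r _.
by rewrite inE; case: (P r).
Qed.


Section Link.
Variables (R : realType) (K : nat) (u : 'I_K -> R) (gamma : R) (n : nat).

Definition Zc (i j : 'I_n) (t : n.-tuple 'I_K) : nat :=
  ((nat_of_ord (tnth t i) != 0%N) + (nat_of_ord (tnth t j) == 0%N))%N.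

Definition rowpoly i j : {poly R} :=
  \sum_(t : n.-tuple 'I_K) row_prob u gamma t *: 'X^(Zc i j t).

Lemma col_hist_sum m (d : {ffun 'I_m -> n.-tuple 'I_K}) c :
  col_hist d c = (\sum_r (val (tnth (d r) c) != 0%N))%N.
Proof. by rewrite /col_hist card_set_sum. Qed.

Lemma count_lem m (a b c : 'I_m -> bool) : (forall r, c r = ~~ b r) ->
  ((\sum_r a r == \sum_r b r) = (\sum_r (a r + c r) == m))%N.
Proof.
move=> hc; rewrite big_split /=.
have e : (\sum_(r < m) c r + \sum_(r < m) b r = m)%N.
  rewrite -big_split /=; under eq_bigr => r _ do rewrite hc addn_negb.
  by rewrite sum1_card card_ord.
apply/eqP/eqP => [->|h]; first by rewrite addnC.
by apply/eqP; rewrite -(eqn_add2r (\sum_(r < m) c r)) h; apply/eqP; rewrite -[LHS]e addnC.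
Qed.

Lemma pair_prob m i j :
  \sum_(d : {ffun 'I_m -> n.-tuple 'I_K} | col_hist d i == col_hist d j) db_prob u gamma d
  = ((rowpoly i j) ^+ m)`_m.
Proof.
rewrite /rowpoly (ffun_poly m (fun t : n.-tuple 'I_K => row_prob u gamma t)).
apply: eq_bigl => d; rewrite !col_hist_sum /Zc.
by apply: count_lem => r; rewrite negbK.
Qed.
End Link.


Section Link2.
Variables (R : realType) (K : nat) (u : 'I_K -> R) (gamma : R) (n : nat) (o : 'I_K).
Hypothesis ho : val o = 0%N.
Hypothesis hu : \sum_j u j = 1.

Lemma Ind_val y : Ind R o y = (nat_of_ord y == 0%N)%:R.
Proof. by rewrite /Ind -ho val_eqE. Qed.

Lemma coef0_Rw (i j : 'I_n) : (rowpoly u gamma i j)`_0 =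
  Rw u gamma n (fun s => Ind R o (nth o s i) * (1 - Ind R o (nth o s j))).
Proof.
rewrite coef_sumMXn /Rw big_mkcond /=; apply: eq_bigr => t _.
rewrite /Zc !(tnth_nth o) !Ind_val.
move: (nat_of_ord (nth o t i)) (nat_of_ord (nth o t j)) => a b.
by case: a => [|a]; case: b => [|b]; rewrite /= ?mulr1n ?mulr0n; ring.
Qed.

Lemma coef2_Rw (i j : 'I_n) : (rowpoly u gamma i j)`_2 =
  Rw u gamma n (fun s => (1 - Ind R o (nth o s i)) * Ind R o (nth o s j)).
Proof.
rewrite coef_sumMXn /Rw big_mkcond /=; apply: eq_bigr => t _.
rewrite /Zc !(tnth_nth o) !Ind_val.
move: (nat_of_ord (nth o t i)) (nat_of_ord (nth o t j)) => a b.
by case: a => [|a]; case: b => [|b]; rewrite /= ?mulr1n ?mulr0n; ring.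
Qed.

Lemma rowpoly_1 (i j : 'I_n) : (rowpoly u gamma i j).[1] = 1.
Proof.
rewrite /rowpoly horner_sum -[RHS](Rw_total gamma hu n) /Rw; apply: eq_bigr => t _.
by rewrite hornerZ hornerXn expr1n.
Qed.

Lemma Rw_sub f g : Rw u gamma n (fun s => f s - g s) = Rw u gamma n f - Rw u gamma n g.
Proof. by rewrite /Rw -sumrB; apply: eq_bigr => t _; ring. Qed.

Lemma Rw_pair (i j : 'I_n) : i != j -> exists2 d, (0 < d)%N &
  Rw u gamma n (fun s => Ind R o (nth o s i) * Ind R o (nth o s j)) = u o * pk u gamma o d o.
Proof.
move=> hij; case: (ltngtP i j) => h.
- by exists (j - i)%N; [lia | apply: Rw_two].
- exists (i - j)%N; first lia.
  rewrite -(Rw_two gamma o hu h (ltn_ord i)); rewrite /Rw; apply: eq_bigr => t _; ring.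
- by move: hij; rewrite (val_inj h) eqxx.
Qed.

Lemma coef02 (i j : 'I_n) : i != j -> exists2 d, (0 < d)%N &
  (rowpoly u gamma i j)`_0 = u o - u o * pk u gamma o d o /\
  (rowpoly u gamma i j)`_2 = u o - u o * pk u gamma o d o.
Proof.
move=> hij; have [d hd e] := Rw_pair hij; exists d => //; split.
- rewrite coef0_Rw.
  rewrite (_ : (fun s => _) = (fun s => Ind R o (nth o s i) - Ind R o (nth o s i) * Ind R o (nth o s j))); last by apply: funext => s; ring.
  by rewrite Rw_sub e Rw_one.
- rewrite coef2_Rw.
  rewrite (_ : (fun s => _) = (fun s => Ind R o (nth o s j) - Ind R o (nth o s i) * Ind R o (nth o s j))); last by apply: funext => s; ring.
  by rewrite Rw_sub e Rw_one.
Qed.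
End Link2.


Lemma union_bound (R : realType) (T I : finType) (F : T -> R) (P : I -> I -> T -> bool) :
  (forall t, 0 <= F t) ->
  \sum_(t | [exists i, exists j, P i j t]) F t <= \sum_i \sum_j \sum_(t | P i j t) F t.
Proof.
move=> hF.
apply: (@le_trans _ _ (\sum_t \sum_i \sum_j (P i j t)%:R * F t)).
  rewrite [X in _ <= X](bigID (fun t => [exists i, exists j, P i j t])) /=.
  rewrite -[X in X <= _]addr0; apply: lerD; last first.
    apply: sumr_ge0 => t _; apply: sumr_ge0 => i _; apply: sumr_ge0 => j _.
    by apply: mulr_ge0.
  apply: ler_sum => t /existsP [i0 /existsP [j0 hP]].
  rewrite (bigD1 i0) //= (bigD1 j0) //= hP mul1r -addrA lerDl.
  apply: addr_ge0; apply: sumr_ge0 => i _; try apply: sumr_ge0 => j _; by apply: mulr_ge0.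
rewrite exchange_big /=; apply: ler_sum => i _.
rewrite exchange_big /=; apply: ler_sum => j _.
rewrite [X in _ <= X]big_mkcond /=; apply: ler_sum => t _.
by case: (P i j t); rewrite ?mul1r ?mul0r.
Qed.

Section Final.
Variables (R : realType) (K : nat) (u : 'I_K -> R) (gamma : R).
Hypothesis hu_pos : forall j, 0 < u j.
Hypothesis hu_sum : \sum_(j < K) u j = 1.
Hypothesis hgamma_lo : forall j, - (u j / (1 - u j)) < gamma.
Hypothesis hgamma_hi : gamma < 1.

Lemma u_pair x y : x != y -> u x + u y <= 1.
Proof.
move=> hxy; rewrite -hu_sum (bigD1 x) //= (bigD1 y) 1?eq_sym //= addrA lerDl.
apply: sumr_ge0 => k _; exact: ltW.
Qed.

Lemma u_lt1 x (y : 'I_K) : x != y -> u x < 1.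
Proof. move=> h; have := u_pair h; have := hu_pos y; lra. Qed.

Lemma trans_ge0 (y0 : 'I_K -> 'I_K) (hy0 : forall x, x != y0 x) x y : 0 <= trans u gamma x y.
Proof.
rewrite /trans; case: eqP => [<-|_]; last first.
  rewrite mulr0 add0r; apply: mulr_ge0; last exact: ltW. rewrite subr_ge0; exact: ltW.
have h1 := u_lt1 (hy0 x); have h2 := hgamma_lo x.
have h3 : 0 < 1 - u x by lra.
have : - u x < gamma * (1 - u x).
  by rewrite -ltr_pdivrMr // mulNr.
rewrite /= ?mulr1n mulr1; nra.
Qed.


Hypothesis htr : forall x y, 0 <= trans u gamma x y.

Lemma chain_ge0 x s : 0 <= chain_prob u gamma x s.
Proof. elim: s x => [|y s IH] x /=; [exact: ler01 | apply: mulr_ge0 => //]. Qed.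

Lemma row_ge0 s : 0 <= row_prob u gamma s.
Proof. case: s => [|x s] /=; [exact: ler01 | apply: mulr_ge0; [exact: ltW | exact: chain_ge0]]. Qed.

Lemma db_ge0 m n (d : {ffun 'I_m -> n.-tuple 'I_K}) : 0 <= db_prob u gamma d.
Proof. by apply: prodr_ge0 => i _; apply: row_ge0. Qed.

Lemma gpow_le d : `|gamma| <= 1 -> (0 < d)%N -> gamma ^+ d <= `|gamma|.
Proof.
move=> hg; case: d => [|d] // _.
apply: le_trans (ler_norm _) _; rewrite normrX exprS.
rewrite -[X in _ <= X]mulr1; apply: ler_wpM2l => //.
by apply: exprn_ile1.
Qed.

Variable o : 'I_K.
Hypothesis ho : val o = 0%N.
Hypothesis hg1 : `|gamma| < 1.
Hypothesis huo : u o < 1.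

Definition delta := u o * (1 - u o) * (1 - `|gamma|).

Lemma delta_gt0 : 0 < delta.
Proof. rewrite /delta; apply: mulr_gt0; [apply: mulr_gt0 |]; rewrite ?subr_gt0 //. Qed.

Lemma pair_bound m n (i j : 'I_n) : i != j ->
  (m.+1)%:R * (2 * delta) *
  (\sum_(d : {ffun 'I_m -> n.-tuple 'I_K} | col_hist d i == col_hist d j) db_prob u gamma d) ^+ 2 <= 1.
Proof.
move=> hij; rewrite pair_prob.
have [d hd [e0 e2]] := coef02 gamma ho hu_sum hij.
have key : delta <= u o - u o * pk u gamma o d o.
  have -> : u o - u o * pk u gamma o d o = u o * (1 - u o) * (1 - gamma ^+ d).
    by rewrite /pk /Ind eqxx /=; ring.
  rewrite /delta; apply: ler_wpM2l.
    by apply: mulr_ge0; [exact: ltW | rewrite subr_ge0; exact: ltW].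
  by apply: lerB => //; apply: gpow_le => //; exact: ltW.
apply: coef_pow_bound.
- by move=> k; rewrite coef_sumMXn; apply: sumr_ge0 => t _; apply: row_ge0.
- exact: rowpoly_1.
- exact: delta_gt0.
- by rewrite e0.
- by rewrite e2.
Qed.
End Final.

Unset Implicit Arguments.
Local Open Scope classical_set_scope.
Local Open Scope ring_scope.

Theorem lemma1 (R : realType) (K : nat) (u : 'I_K -> R) (gamma : R)
  (m : nat -> nat)
  (hK : (2 <= K)%N)
  (hu_pos : forall j, 0 < u j)
  (hu_sum : \sum_(j < K) u j = 1)
  (hgamma_lo : forall j, - (u j / (1 - u j)) < gamma)
  (hgamma_hi : gamma < 1)
  (hm : forall C : R, 0 < C -> \forall n \near \oo, C * (n%:R ^+ 4) < (m n)%:R) :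
  (fun n => prob_hist_collision u gamma (m n) n) @ \oo --> (0 : R^o).
Proof.
have hK0 : (0 < K)%N by lia.
have hK1 : (1 < K)%N by lia.
pose o := Ordinal hK0; pose o1 := Ordinal hK1.
have ho : val o = 0%N by [].
have ho1 : o != o1 by apply/eqP => /(congr1 val).
pose y0 := fun x : 'I_K => if x == o then o1 else o.
have hy0 : forall x, x != y0 x.
  move=> x; rewrite /y0; case: (x =P o) => [->|/eqP h] //.
have htr : forall x y, 0 <= trans u gamma x y.
  exact: (trans_ge0 hu_pos hu_sum hgamma_lo hgamma_hi hy0).
have huo : u o < 1 by apply: (u_lt1 hu_pos hu_sum ho1).
have hpair := u_pair hu_pos hu_sum ho1.
have hg1 : `|gamma| < 1.
  rewrite ltr_norml hgamma_hi andbT.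
  have hz : exists z, u z <= 1 - u z.
    case: (lerP (u o) (1 - u o)) => h; first by exists o.
    by exists o1; lra.
  case: hz => z hz; have := hgamma_lo z; have := hu_pos z => h0 h1.
  have h2 : u z / (1 - u z) <= 1.
    have h3 : 0 < 1 - u z by lra.
    by rewrite ler_pdivrMr // mul1r.
  lra.
set dl := delta u gamma o.
have dl0 : 0 < dl by apply: (delta_gt0 hu_pos hg1).
have pb := pair_bound hu_pos hu_sum htr ho hg1 huo.
have bound : forall M k, prob_hist_collision u gamma M k <=
    (k%:R * (k%:R * Num.sqrt (((M.+1)%:R * (2 * dl))^-1))).
  move=> M k; set s := Num.sqrt _.
  have s0 : 0 <= s by apply: sqrtr_ge0.
  rewrite /prob_hist_collision /hist_collision.
  have ub := union_bound (fun i j (d : {ffun 'I_M -> k.-tuple 'I_K}) =>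
      (i != j) && (col_hist d i == col_hist d j)) (fun d => db_ge0 hu_pos htr d).
  apply: le_trans ub _.
  have -> : k%:R * (k%:R * s) = \sum_(i < k) \sum_(j < k) s.
    by rewrite !sumr_const !card_ord !mulr_natl.
  apply: ler_sum => i _; apply: ler_sum => j _.
  case: (eqVneq i j) => [->|hij].
    by rewrite big_pred0 // => d; rewrite eqxx.
  rewrite (eq_bigl (fun d => col_hist d i == col_hist d j)); last by [].
  have := pb M k i j hij; set P := \sum_(d | _) _ => hP.
  have P0 : 0 <= P by apply: sumr_ge0 => d _; apply: (db_ge0 hu_pos htr).
  have A0 : 0 < (M.+1)%:R * (2 * dl) by apply: mulr_gt0; [rewrite ltr0Sn | lra].
  rewrite -(ger0_norm P0) -sqrtr_sqr; apply: ler_wsqrtr.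
  by rewrite -[X in _ <= X]mulr1 ler_pdivlMl.
apply/cvgr0Pnorm_lt => e e0.
have dle : 0 < 2 * dl * e ^+ 2 by apply: mulr_gt0; [lra | exact: exprn_gt0].
have hC : 0 < (2 * dl * e ^+ 2)^-1 by rewrite invr_gt0.
move: (hm _ hC); apply: filterS => k hk.
set M := m k in hk *.
set P := prob_hist_collision u gamma M k.
have P0 : 0 <= P by apply: sumr_ge0 => d _; apply: (db_ge0 hu_pos htr).
have hb := bound M k; rewrite -/P in hb.
set A := (M.+1)%:R * (2 * dl) in hb.
have A0 : 0 < A by apply: mulr_gt0; [rewrite ltr0Sn | lra].
set s := Num.sqrt _ in hb.
have s2 : s ^+ 2 = A^-1 by rewrite sqr_sqrtr // invr_ge0 ltW.
have hP2 : P ^+ 2 <= k%:R ^+ 4 * A^-1.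
  rewrite -s2; have -> : k%:R ^+ 4 * s ^+ 2 = (k%:R * (k%:R * s)) ^+ 2 by ring.
  by rewrite !expr2; apply: ler_pM.
rewrite ltr_pdivrMl // in hk.
have hk4 : k%:R ^+ 4 * A^-1 < e ^+ 2.
  rewrite ltr_pdivrMr //.
  apply: lt_le_trans hk _.
  have -> : e ^+ 2 * A = 2 * dl * e ^+ 2 * M%:R + 2 * dl * e ^+ 2.
    by rewrite /A mulrS; ring.
  by rewrite lerDl ltW.
rewrite ger0_norm //.
rewrite ltNge; apply/negP => h.
have := ler_pM (ltW e0) (ltW e0) h h; rewrite -!expr2 => h2.
have := le_lt_trans h2 (le_lt_trans hP2 hk4); by rewrite ltxx.
Qed.
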